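(* Let $H$ be obtained from a graph $G$ on vertices $v_1,\dots,v_k$ by expanding each $v_i$ by the graph $M_i=(V_i,E_i)$. Let $\Omega$ be a potential maximal clique of $H$ and let $\Omega_G=\{v_i \mid V_i\cap\Omega\neq\emptyset\}$. If $\Omega=\bigcup_{v_i\in\Omega_G}V_i$, then $\Omega_G$ is a potential maximal clique of $G$.
   Context: Expansion: given a graph $G$ on vertices $v_1,\dots,v_k$ and pairwise disjoint graphs $M_i=(V_i,E_i)$, the graph $H$ obtained by expanding each $v_i$ by $M_i$ has vertex set $V_1\cup\dots\cup V_k$ and edge set $E_1\cup\dots\cup E_k\cup\{ab \mid a\in V_i, b\in V_j, v_iv_j\in E(G)\}$. A graph is chordal if every cycle of length at least 4 has a chord; a minimal triangulation of a graph $F$ is a chordal supergraph on the same vertex set such that no proper subset of its edge set containing $E(F)$ gives a chordal graph. A potential maximal clique of $F$ is a vertex set that is a maximal clique of some minimal triangulation of $F$. *)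

(* Defs.v *)
From mathcomp Require Import all_boot.
Set Implicit Arguments. Unset Strict Implicit. Unset Printing Implicit Defensive.

Section Graphs.
Variable T : finType.

Definition simple_graph (e : rel T) : Prop := symmetric e /\ irreflexive e.

Definition has_chord (e : rel T) (s : seq T) : Prop :=
  exists x y, [/\ x \in s, y \in s, x != y,
                  (y != next s x) && (x != next s y) & e x y].

Definition chordal (e : rel T) : Prop :=
  forall s : seq T, uniq s -> 4 <= size s -> cycle e s -> has_chord e s.

Definition subrel_edges (e1 e2 : rel T) : Prop := forall x y, e1 x y -> e2 x y.

Definition minimal_triangulation (e f : rel T) : Prop :=
  [/\ simple_graph f, subrel_edges e f, chordal f &
      forall g : rel T, simple_graph g -> subrel_edges e g -> subrel_edges g f ->
        (exists x y, f x y && ~~ g x y) -> ~ chordal g].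

Definition is_clique (e : rel T) (S : {set T}) : Prop :=
  forall x y, x \in S -> y \in S -> x != y -> e x y.

Definition maximal_clique (e : rel T) (S : {set T}) : Prop :=
  is_clique e S /\ forall S' : {set T}, S \proper S' -> ~ is_clique e S'.

Definition potential_maximal_clique (e : rel T) (S : {set T}) : Prop :=
  exists f : rel T, minimal_triangulation e f /\ maximal_clique f S.

End Graphs.

(* Expansion: the vertex set of H is V, partitioned into blocks V_i = f^-1(i)
   for i : K (vertices of G).  M_i is the graph on V_i given by eM restricted
   to V_i. *)
Definition expand (K V : finType) (eG : rel K) (eM : rel V) (f : V -> K) : rel V :=
  fun x y => ((f x == f y) && eM x y) || eG (f x) (f y).

(* Main.v *)
Require Import Defs.
From mathcomp Require Import all_boot.
From mathcomp Require Import zify.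
From Stdlib Require Import Classical.
Set Implicit Arguments. Unset Strict Implicit. Unset Printing Implicit Defensive.


Definition nx (n i : nat) := if i.+1 < n then i.+1 else 0.
Definition cyc (T:Type) (e : rel T) n (c : nat -> T) := forall i, i < n -> e (c i) (c (nx n i)).
Definition injn (T:Type) n (c : nat -> T) := forall i j, i < n -> j < n -> c i = c j -> i = j.
Definition chI (T:Type) (e : rel T) := forall n c, 4 <= n -> injn n c -> cyc e n c ->
  exists i j, i < n /\ j < n /\ i <> j /\ j <> nx n i /\ i <> nx n j /\ e (c i) (c j).

Lemma nx_lt n i : i < n -> nx n i < n.
Proof. rewrite /nx; case: ifP => //; lia. Qed.

Lemma next_nthI (T : eqType) (s : seq T) x0 i : uniq s -> i < size s ->
  next s (nth x0 s i) = nth x0 s (nx (size s) i).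
Proof.
move=> U lt; rewrite next_nth mem_nth // index_uniq //.
case: s U lt => [|y q] //= /andP[_ Uq] lt.
rewrite /nx /=; case: ifP => h.
  by apply: set_nth_default; lia.
rewrite nth_default //; lia.
Qed.

Lemma chordal_chI (T : finType) (e : rel T) : chordal e -> chI e.
Proof.
move=> ch n c n4 inj cy.
have n0 : 0 < n by lia.
set s := mkseq c n.
have ss : size s = n by rewrite size_mkseq.
have nths : forall i, i < n -> nth (c 0) s i = c i by move=> i lt; rewrite nth_mkseq.
have U : uniq s.
  rewrite map_inj_in_uniq ?iota_uniq // => i j; rewrite !mem_iota /= !add0n => hi hj.
  exact: inj.
have memP : forall x, x \in s -> exists2 i, i < n & x = c i.
  move=> x xs; exists (index x s); first by rewrite -ss index_mem.
  by rewrite -nths ?nth_index // -ss index_mem.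
have nxt : forall i, i < n -> next s (c i) = c (nx n i).
  move=> i lt; rewrite -nths // next_nthI ?ss // nths //; exact: nx_lt.
have cs : cycle e s.
  apply: cycle_from_next => // x /memP [i lt ->]; rewrite nxt //; exact: cy.
have s4 : 4 <= size s by rewrite ss.
have [x [y [xs ys xy /andP [h1 h2] exy]]] := ch s U s4 cs.
case/memP: xs => i li ex; case/memP: ys => j lj ey; subst x y.
exists i, j; split => //; split => //; split; first by move=> E; rewrite E eqxx in xy.
split; first by move=> E; move: h1; rewrite nxt // -E eqxx.
split; first by move=> E; move: h2; rewrite nxt // -E eqxx.
done.
Qed.

Lemma chI_chordal (T : finType) (e : rel T) : chI e -> chordal e.
Proof.
move=> ch s U s4 cs.
case: s U s4 cs => [|x0 q] // U s4 cs.
set s := x0 :: q in U s4 cs *.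
set c := nth x0 s.
have inj : injn (size s) c.
  by move=> i j li lj /eqP; rewrite /c nth_uniq // => /eqP.
have cy : cyc e (size s) c.
  move=> i li; rewrite /c -next_nthI //; apply: next_cycle => //; exact: mem_nth.
have [i [j [li [lj [ij [h1 [h2 eij]]]]]]] := ch (size s) c s4 inj cy.
exists (c i), (c j); split; rewrite /c ?mem_nth //.
- by apply/eqP => /(inj _ _ li lj).
- apply/andP; split; apply/eqP; rewrite next_nthI // => /(inj _ _ _ _) E.
  + by apply: h1; apply: E => //; exact: nx_lt.
  + by apply: h2; apply: E => //; exact: nx_lt.
Qed.


Section QCH.
Variables (T : finType) (F : rel T).
Hypothesis Fsym : symmetric F.
Hypothesis chF : chI F.

Definition full (A B : {set T}) := forall x y, x \in A -> y \in B -> F x y.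

Lemma full_sym A B : full A B -> full B A.
Proof. by move=> h x y xB yA; rewrite Fsym; apply: h. Qed.

Definition Good k (X : nat -> {set T}) :=
  [/\ 4 <= k, forall t, t < k -> X t != set0,
      forall t u, t < k -> u < k -> t <> u -> [disjoint X t & X u],
      forall t, t < k -> full (X t) (X (nx k t))
    & forall t u, t < k -> u < k -> t <> u -> u <> nx k t -> t <> nx k u -> ~ full (X t) (X u)].

Lemma dich k (IHk : forall k', k' < k -> forall Y, ~ Good k' Y) X m :
  Good k X -> m \in X 0 -> forall u, 2 <= u -> u <= k - 2 ->
  full [set m] (X u) -> full [set m] (X 2).
Proof.
case=> k4 ne dis fc nf mX.
elim/ltn_ind => u IHu u2 uk fu.
case: (ltngtP u 2) => [|h|<-]; [lia| |done].
apply: NNPP => nf2.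
pose Y i := if i == 0 then [set m] else X i.
apply: (IHk u.+1 _ Y); first lia.
split.
- lia.
- move=> t lt; rewrite /Y; case: ifP => _; last by apply: ne; lia.
  by apply/set0Pn; exists m; rewrite inE.
- move=> t v lt lv tv; rewrite /Y.
  have dm : forall j, 0 < j -> j < k -> [disjoint [set m] & X j].
    move=> j j0 jk; rewrite disjoints_subset sub1set inE.
    have := dis 0 j ltac:(lia) jk ltac:(lia); rewrite disjoints_subset.
    by move/subsetP => /(_ m mX); rewrite inE.
  case: eqP => [t0|t0]; case: eqP => [v0|v0]; try lia.
  + by apply: dm; lia.
  + by rewrite disjoint_sym; apply: dm; lia.
  + by apply: dis; lia.
- move=> t lt; rewrite /Y.
  have nxeq : nx u.+1 t = if t < u then t.+1 else 0.
    by rewrite /nx; case: (ltnP t u) => hh; [rewrite ifT ?ifT | rewrite ifF ?ifF]; lia.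
  rewrite nxeq; case: (ltnP t u) => htu; last first.
    have -> : t = u by lia.
    by rewrite eqxx ifF; [apply: full_sym | lia].
  case t0: (t == 0).
    move/eqP: t0 => -> /=.
    have := fc 0 ltac:(lia); rewrite /nx ifT; last lia.
    by move=> hh x y; rewrite inE => /eqP -> yX; apply: hh.
  have := fc t ltac:(lia); rewrite /nx ifT //; lia.
- move=> t v lt lv tv vt tv'.
  have E : forall i, nx u.+1 i = if i < u then i.+1 else 0.
    by move=> i; rewrite /nx; case: (ltnP i u) => hh; [rewrite ifT ?ifT | rewrite ifF ?ifF]; lia.
  rewrite !E in vt tv'.
  move: vt tv'; case: ifP => h1; case: ifP => h2 => vt tv'.
  all: rewrite /Y; case: eqP => [t0|t0]; case: eqP => [v0|v0]; try lia.
  all: try (subst t => fv; have := IHu v ltac:(lia) ltac:(lia) ltac:(lia) fv; done).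
  all: try (subst v => fv; have := IHu t ltac:(lia) ltac:(lia) ltac:(lia) (full_sym fv); done).
  all: apply: nf; try lia; rewrite /nx; case: ifP => h3; lia.
Qed.


Definition rt k t i := if i + t < k then i + t else i + t - k.

Lemma rt_lt k t i : t < k -> i < k -> rt k t i < k.
Proof. rewrite /rt; case: ifP; lia. Qed.

Lemma rt_inj k t i j : t < k -> i < k -> j < k -> rt k t i = rt k t j -> i = j.
Proof. rewrite /rt; case: ifP; case: ifP; lia. Qed.

Lemma rt_nx k t i : t < k -> i < k -> nx k (rt k t i) = rt k t (nx k i).
Proof. rewrite /rt /nx => h1 h2; do ! case: ifP; lia. Qed.

Lemma Good_rot k X t : t < k -> Good k X -> Good k (fun i => X (rt k t i)).
Proof.
move=> tk [k4 ne dis fc nf]; split => //.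
- by move=> i li; apply: ne; apply: rt_lt.
- move=> i j li lj ij; apply: dis; try apply: rt_lt => //.
  by move/(rt_inj tk li lj).
- by move=> i li; rewrite -rt_nx //; apply: fc; apply: rt_lt.
- move=> i j li lj ij h1 h2; apply: nf; try apply: rt_lt => //.
  + by move/(rt_inj tk li lj).
  + rewrite rt_nx // => /(rt_inj tk lj (nx_lt li)); done.
  + rewrite rt_nx // => /(rt_inj tk li (nx_lt lj)); done.
Qed.

Lemma nonfull k (IHk : forall k', k' < k -> forall Y, ~ Good k' Y) X t m :
  Good k X -> t < k -> m \in X t -> ~ full [set m] (X (rt k t 2)) ->
  forall u, u < k -> u <> t -> u <> nx k t -> t <> nx k u -> ~ full [set m] (X u).
Proof.
move=> G tk mX nf2 u uk ut u1 u2 fu.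
have G' := Good_rot tk G.
have k4 : 4 <= k by case: G.
pose u' := if t <= u then u - t else u + k - t.
have ru : rt k t u' = u by rewrite /rt /u'; case: ifP; case: ifP; lia.
have hu' : 2 <= u' /\ u' <= k - 2.
  move: u1 u2; rewrite /u' /nx; case: ifP; case: ifP; case: ifP; lia.
apply: nf2.
have := @dich k IHk (fun i => X (rt k t i)) m G'.
rewrite /= {1}/rt add0n ifT // => /(_ mX u' (proj1 hu') (proj2 hu')).
by rewrite ru => /(_ fu).
Qed.

Definition msr k (X : nat -> {set T}) := \sum_(i < k) #|X i|.

Lemma singles k X : Good k X -> (forall t, t < k -> #|X t| <= 1) -> False.
Proof.
case=> k4 ne dis fc nf s1.
have ex : forall t, t < k -> exists x, X t = [set x].
  move=> t tk; have /set0Pn [x xX] := ne t tk.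
  exists x; apply/eqP; rewrite eq_sym eqEcard sub1set xX cards1 s1 //.
have [x0 _] := ex 0 ltac:(lia).
pose c t := odflt x0 [pick x in X t].
have cX : forall t, t < k -> X t = [set c t].
  move=> t tk; have [x E] := ex t tk; rewrite /c E.
  case: pickP => [y /set1P -> //|].
  by move/(_ x); rewrite set11.
have inj : injn k c.
  move=> i j li lj cij; apply: NNPP => ij.
  have := dis i j li lj ij; rewrite (cX i li) (cX j lj) cij.
  by rewrite disjoints_subset sub1set !inE eqxx.
have cy : cyc F k c.
  move=> i li; have := fc i li; rewrite (cX i li) (cX _ (nx_lt li)).
  by move/(_ (c i) (c (nx k i))); rewrite !inE !eqxx; apply.
have [i [j [li [lj [ij [h1 [h2 Fij]]]]]]] := chF k4 inj cy.
apply: (nf i j li lj ij h1 h2); rewrite (cX i li) (cX j lj).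
by move=> x y; rewrite !inE => /eqP -> /eqP ->.
Qed.

Lemma full_sub (A B A' B' : {set T}) : A' \subset A -> B' \subset B -> full A B -> full A' B'.
Proof. by move=> /subsetP h1 /subsetP h2 f x y xa yb; apply: f; [apply: h1 | apply: h2]. Qed.

Lemma noGood k X : ~ Good k X.
Proof.
elim/ltn_ind: k X => k IHk X.
suff : forall n X, msr k X = n -> ~ Good k X by move/(_ _ X erefl).
elim/ltn_ind => n IHn {}X Em G.
have [k4 ne dis fc nf] := G.
case: (boolP [exists t : 'I_k, 1 < #|X t|]) => [/existsP [[t tk] /= big]|]; last first.
  move/existsPn => h; apply: (singles G) => t tk.
  by have := h (Ordinal tk); rewrite /= ltnNge negbK.
have r2k : rt k t 2 < k by apply: rt_lt => //; lia.
have hadj : rt k t 2 <> t /\ rt k t 2 <> nx k t /\ t <> nx k (rt k t 2).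
  rewrite /rt /nx; do ! case: ifP; lia.
have [m [mX nfm]] : exists m, m \in X t /\ ~ full [set m] (X (rt k t 2)).
  have [a1 [a2 a3]] := hadj.
  apply: NNPP => hn; apply: (nf t (rt k t 2) tk r2k) => //; first by move=> E; apply: a1.
  move=> x y xX yX; apply: NNPP => nF; apply: hn; exists x; split => //.
  by move=> f; apply: nF; apply: f => //; rewrite inE.
have NF := nonfull IHk G tk mX nfm.
pose Y i := if i == t then [set m] else X i.
have sm : [set m] \subset X t by rewrite sub1set.
have GY : Good k Y.
  split => //.
  - move=> i ik; rewrite /Y; case: (i =P t) => _; last exact: ne.
    by apply/set0Pn; exists m; rewrite inE.
  - move=> i j ik jk ij; rewrite /Y; case: (i =P t) => [Ei|_]; case: (j =P t) => [Ej|_].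
    + by subst; case: ij.
    + by subst i; apply: disjointWl sm _; apply: dis.
    + by subst j; apply: disjointWr sm _; apply: dis.
    + by apply: dis.
  - move=> i ik; rewrite /Y; case: (i =P t) => [Ei|it]; case: (nx k i =P t) => [E|_].
    + by exfalso; subst i; move: E; rewrite /nx; case: ifP; lia.
    + by subst i; apply: (full_sub _ _ (fc t tk)).
    + by apply: (full_sub _ _ (fc i ik)) => //; rewrite E.
    + by apply: fc.
  - move=> i j ik jk ij h1 h2; rewrite /Y; case: (i =P t) => [Ei|it]; case: (j =P t) => [Ej|_].
    + by subst; case: ij.
    + by subst i; exact: (NF j jk (fun E => ij (esym E)) h1 h2).
    + by subst j => f; exact: (NF i ik it h2 h1 (full_sym f)).
    + by apply: nf.
apply: (IHn (msr k Y) _ Y erefl GY).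
rewrite -Em /msr (bigD1 (Ordinal tk)) //= [X in _ < X](bigD1 (Ordinal tk)) //=.
rewrite /Y eqxx cards1.
have -> : \sum_(i < k | i != Ordinal tk) #|(if val i == t then [set m] else X i)| =
          \sum_(i < k | i != Ordinal tk) #|X i|.
  by apply: eq_bigr => i ni; rewrite ifF //; apply/eqP => E; move: ni; rewrite -val_eqE /= E eqxx.
by rewrite ltn_add2r.
Qed.

End QCH.

Section Quot.
Variables (K V : finType) (f : V -> K) (F : rel V).
Hypothesis Fsym : symmetric F.
Hypothesis chF : chI F.
Hypothesis fsurj : forall i, exists x, f x = i.

Definition Qr : rel K := fun i j => (i != j) &&
  [forall x, forall y, (f x == i) ==> (f y == j) ==> F x y].

Lemma QrP i j : reflect (i <> j /\ forall x y, f x = i -> f y = j -> F x y) (Qr i j).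
Proof.
apply: (iffP andP) => [[/eqP ij /forallP h]|[ij h]]; split.
- by [].
- by move=> x y fx fy; have /forallP := h x => /(_ y); rewrite fx fy !eqxx.
- by apply/eqP.
- by apply/forallP => x; apply/forallP => y; apply/implyP => /eqP fx; apply/implyP => /eqP fy; apply: h.
Qed.

Lemma Q_chI : chI Qr.
Proof.
move=> n c n4 inj cy; apply: NNPP => nch.
pose X t := [set x | f x == c t].
apply: (@noGood _ F Fsym chF n X); split => //.
- move=> t tn; have [x fx] := fsurj (c t); apply/set0Pn; exists x; by rewrite inE fx.
- move=> t u tn un tu; rewrite disjoints_subset; apply/subsetP => x; rewrite !inE => /eqP ->.
  by apply/eqP => /(inj _ _ tn un).
- move=> t tn x y; rewrite !inE => /eqP fx /eqP fy; have /QrP [_ h] := cy t tn; exact: h.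
- move=> t u tn un tu h1 h2 fu; apply: nch; exists t, u; do !split => //.
  apply/QrP; split; first by move/(inj _ _ tn un).
  by move=> x y fx fy; apply: fu; rewrite inE ?fx ?fy.
Qed.

End Quot.


Ltac nxl := rewrite /nx; repeat (case: ifP => ?); lia.

Lemma nxE n k : k < n -> (nx n k = k.+1 /\ k.+1 < n) \/ (nx n k = 0 /\ k.+1 = n).
Proof. rewrite /nx; case: ifP; lia. Qed.

Section Lift.
Variables (K V : finType) (f : V -> K) (F : rel V) (g : rel K).
Hypothesis chF : chI F.
Hypothesis chg : chI g.

Definition liftr : rel V := fun x y =>
  (f x == f y) && F x y || (f x != f y) && g (f x) (f y).

Hypothesis HS : forall a a' b b', a <> a' -> f a = f a' -> ~~ F a a' -> b <> b' ->
  f b <> f a -> f b' <> f a -> g (f a) (f b) -> g (f a) (f b') -> liftr b b'.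

Lemma liftr_same x y : f x = f y -> liftr x y = F x y.
Proof. by move=> e; rewrite /liftr e eqxx /=; case: (F x y). Qed.

Lemma liftr_diff x y : f x <> f y -> liftr x y = g (f x) (f y).
Proof. by move=> /eqP e; rewrite /liftr (negbTE e). Qed.

Lemma lift_chI : chI liftr.
Proof.
move=> n c n4 inj cy; apply: NNPP => nch.
have cl : forall i j, i < n -> j < n -> i <> j -> j <> nx n i -> i <> nx n j -> ~~ liftr (c i) (c j).
  move=> i j li lj ij h1 h2; apply/negP => Lij; apply: nch; exists i, j; repeat split => //.
have nxi : forall i, i < n -> nx n i < n by move=> i; apply: nx_lt.
case: (boolP [forall i : 'I_n, forall j : 'I_n, (f (c i) == f (c j)) ==> (i == j)]) => [/forallP injf|].
  have injf' : injn n (fun i => f (c i)).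
    move=> i j li lj e; have /forallP := injf (Ordinal li) => /(_ (Ordinal lj)).
    by rewrite /= e eqxx /= => /eqP [].
  have cyg : cyc g n (fun i => f (c i)).
    move=> i li; have ne : f (c i) <> f (c (nx n i)).
      by move/(injf' _ _ li (nxi _ li)); nxl.
    by have := cy i li; rewrite liftr_diff.
  have [i [j [li [lj [ij [h1 [h2 gij]]]]]]] := chg n4 injf' cyg.
  apply: (negP (cl i j li lj ij h1 h2)); rewrite liftr_diff //.
  by move/(injf' _ _ li lj).
move/forallPn => [[i li] /forallPn [[j lj]]]; rewrite negb_imply /= => /andP [/eqP fij ij].
move/eqP: ij => ij.
have {}ij : i <> j by move=> E; apply: ij; exact: val_inj.
case: (boolP [forall m : 'I_n, f (c m) == f (c i)]) => [/forallP same|].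
  have sm : forall m, m < n -> f (c m) = f (c i) by move=> m lm; apply/eqP; apply: (same (Ordinal lm)).
  have cyF : cyc F n c.
    move=> m lm; have := cy m lm; rewrite liftr_same //.
    by rewrite !sm //; apply: nxi.
  have [p [q [lp [lq [pq [h1 [h2 Fpq]]]]]]] := chF n4 inj cyF.
  apply: (negP (cl p q lp lq pq h1 h2)); rewrite liftr_same //.
  by rewrite !sm.
move/forallPn => [[m lm] /= /eqP fm].
set b := f (c i).
have [z [lz [fz fy]]] : exists z, z < n /\ f (c z) = b /\ f (c (nx n z)) <> b.
  apply: NNPP => nz.
  have step : forall z, z < n -> f (c z) = b -> f (c (nx n z)) = b.
    move=> z lz fz; apply: NNPP => fy; apply: nz; exists z; done.
  have up : forall d, i + d < n -> f (c (i + d)) = b.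
    elim => [|d IH] h; first by rewrite addn0.
    have := step (i + d) ltac:(lia) (IH ltac:(lia)); rewrite /nx ifT; last lia.
    by rewrite addnS.
  have f0 : f (c 0) = b.
    have := step (n.-1) ltac:(lia); rewrite /nx ifF; last lia.
    apply; have := up (n.-1 - i) ltac:(lia); by have -> : i + (n.-1 - i) = n.-1 by lia.
  have lo : forall d, d < n -> f (c d) = b.
    elim => [|d IH] h; first done.
    have := step d ltac:(lia) (IH ltac:(lia)); rewrite /nx ifT //; lia.
  by apply: fm; apply: lo.
have nxi' := nxi.
have N1 : forall k, k < n -> nx n k <> k by move=> k lk; have := nxE lk; lia.
have N2 : forall k, k < n -> nx n (nx n k) <> k.
  by move=> k lk; have := nxE lk; have := nxE (nxi _ lk); lia.
have N3 : forall k, k < n -> nx n (nx n (nx n k)) <> k.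
  by move=> k lk; have := nxE lk; have := nxE (nxi _ lk); have := nxE (nxi _ (nxi _ lk)); lia.
have Ninj : forall k l, k < n -> l < n -> nx n k = nx n l -> k = l.
  by move=> k l lk ll; have := nxE lk; have := nxE ll; lia.
set y := nx n z.
have ly : y < n by apply: nxi.
have gzy : g b (f (c y)).
  by have := cy z lz; rewrite liftr_diff -/y; [rewrite fz | rewrite fz; auto].
have blk : forall w, w < n -> f (c w) = b -> w = z \/ w = nx n y.
  move=> w lw fw; case: (w =P z) => [->|wz]; [by left | right].
  have Lwy : liftr (c w) (c y) by rewrite liftr_diff fw //; auto.
  apply: NNPP => wy2.
  have wy : w <> y by move=> E; apply: fy; rewrite -/y -E.
  have ynw : y <> nx n w by move=> E; apply: wz; exact: esym (Ninj _ _ lz lw E).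
  by move: (cl w y lw ly wy ynw wy2); rewrite Lwy.
set y2 := nx n y.
have ly2 : y2 < n by apply: nxi.
have [fy2 y2z] : f (c y2) = b /\ y2 <> z.
  have bi := blk i li erefl; have bj := blk j lj (esym fij).
  case: bi => ei; case: bj => ej.
  - by case: ij; rewrite ei ej.
  - split; [by rewrite /y2 -ej -fij | by move=> E; apply: ij; rewrite ei ej -/y2 E].
  - split; [by rewrite /y2 -ei | by move=> E; apply: ij; rewrite ei ej -/y2 E].
  - by case: ij; rewrite ei ej.
have nF : ~~ F (c z) (c y2).
  have := cl z y2 lz ly2 (fun E => y2z (esym E)).
  rewrite liftr_same; last by rewrite fz fy2.
  apply => //.
  - by move=> E; apply: (N1 y ly).
  - by move=> E; apply: (N3 z lz); rewrite -E.
set y3 := nx n y2.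
have ly3 : y3 < n by apply: nxi.
have fy3 : f (c y3) <> b.
  move=> E; case: (blk y3 ly3 E) => E'.
  - by apply: (N3 z lz).
  - by apply: (N1 y2 ly2).
have gy3 : g b (f (c y3)).
  by have := cy y2 ly2; rewrite liftr_diff -/y3 fy2 //; auto.
have zy3 : z = nx n y3.
  have L3 : liftr (c z) (c y3) by rewrite liftr_diff fz //; auto.
  apply: NNPP => h.
  have zy3' : z <> y3 by move=> E; apply: fy3; rewrite -E.
  have y3y : y3 <> nx n z by apply: (N2 y ly).
  by move: (cl z y3 lz ly3 zy3' y3y h); rewrite L3.
have Lyy3 : liftr (c y) (c y3).
  apply: (HS (a := c z) (a' := c y2)).
  - by move/(inj _ _ lz ly2) => E; apply: y2z.
  - by rewrite fz fy2.
  - done.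
  - by move/(inj _ _ ly ly3) => E; apply: (N2 y ly); exact: (esym E).
  - by rewrite fz.
  - by rewrite fz.
  - by rewrite fz.
  - by rewrite fz.
have yy3 : y <> y3 by move=> E; apply: (N2 y ly); exact: (esym E).
have y3ny : y3 <> nx n y by apply: (N1 y2 ly2).
have ynz : y <> nx n y3 by rewrite -zy3 => E; apply: fy; rewrite -/y E fz.
by move: (cl y y3 ly ly3 yy3 y3ny ynz); rewrite Lyy3.
Qed.


End Lift.


Lemma cyc4 (T : eqType) (e : rel T) (esym : symmetric e) (ch : chI e) a b c d :
  a != b -> a != c -> a != d -> b != c -> b != d -> c != d ->
  e a b -> e b c -> e c d -> e d a -> e a c || e b d.
Proof.
move=> ab ac ad bc bd cd e1 e2 e3 e4.
pose f i := nth a [:: a; b; c; d] i.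
have inj : injn 4 f.
  move=> i j li lj; rewrite /f.
  case: i li => [|[|[|[|i]]]] li //; case: j lj => [|[|[|[|j]]]] lj //= E;
  by move: ab ac ad bc bd cd; rewrite E ?eqxx.
have cy : cyc e 4 f.
  by move=> i li; rewrite /f /nx; case: i li => [|[|[|[|i]]]] li.
have [i [j [li [lj [ij [h1 [h2 eij]]]]]]] := ch 4 f (leqnn 4) inj cy.
move: eij h1 h2 ij; rewrite /f /nx.
case: i li => [|[|[|[|i]]]] li //; case: j lj => [|[|[|[|j]]]] lj //=;
  try (by move=> ->); try (by rewrite esym => ->; rewrite orbT).
all: try (by rewrite esym => ->).
all: by move=> ->; rewrite orbT.
Qed.

Lemma arith_x n p a b oa ob NA NB NP Noa Nob :
  p < n -> 3 < n -> a < n.+1 -> b < n.+1 -> a <> p.+1 -> b <> p.+1 -> a <> b ->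
  (NA = a.+1 /\ a.+1 < n.+1 \/ NA = 0 /\ a.+1 = n.+1) ->
  (NB = b.+1 /\ b.+1 < n.+1 \/ NB = 0 /\ b.+1 = n.+1) ->
  b <> NA -> a <> NB ->
  (a <= p /\ oa = a \/ p.+1 < a /\ oa = a.-1) ->
  (b <= p /\ ob = b \/ p.+1 < b /\ ob = b.-1) ->
  (NP = p.+1 /\ p.+1 < n \/ NP = 0 /\ p.+1 = n) ->
  (Noa = oa.+1 /\ oa.+1 < n \/ Noa = 0 /\ oa.+1 = n) ->
  (Nob = ob.+1 /\ ob.+1 < n \/ Nob = 0 /\ ob.+1 = n) ->
  ~ (oa = p /\ ob = NP) -> ~ (ob = p /\ oa = NP) ->
  oa <> ob /\ ob <> Noa /\ oa <> Nob.
Proof. intros; repeat match goal with H : _ \/ _ |- _ => destruct H as [[? ?]|[? ?]] end; subst; (split; [|split]); lia. Qed.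

Section AddCl.
Variables (T : finType) (g : rel T) (s : T).
Hypothesis gsym : symmetric g.
Hypothesis girr : irreflexive g.
Hypothesis chg : chI g.

Definition addcl : rel T := fun x y => g x y || [&& x != y, g s x & g s y].

Lemma addcl_s x : addcl x s = g x s.
Proof. by rewrite /addcl girr !andbF orbF. Qed.

Lemma addcl_chI : chI addcl.
Proof.
move=> n c n4 inj cy; apply: NNPP => nch.
have cl : forall i j, i < n -> j < n -> i <> j -> j <> nx n i -> i <> nx n j -> ~~ addcl (c i) (c j).
  move=> i j li lj ij h1 h2; apply/negP => Lij; apply: nch; exists i, j; repeat split => //.
have nxi : forall i, i < n -> nx n i < n by move=> i; apply: nx_lt.
case: (boolP [exists p : 'I_n, c p == s]) => [/existsP [[p lp] /= /eqP cps]|/existsPn nos].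
  pose r := if p == 0 then n.-1 else p.-1.
  have lr : r < n by rewrite /r; case: ifP; lia.
  have nr : nx n r = p by rewrite /r /nx; case: ifP; case: ifP; lia.
  have g1 : g s (c r) by have := cy r lr; rewrite nr cps addcl_s gsym.
  have g2 : g s (c (nx n p)) by have := cy p lp; rewrite cps /addcl girr /= andbF orbF.
  have q := nxE lp; have q2 := nxE (nxi _ lp).
  have rq : r <> nx n p by rewrite /r; case: ifP; lia.
  have a1 : nx n p <> nx n r by rewrite nr => E; move: q; rewrite E; lia.
  have a2 : r <> nx n (nx n p).
    move: q q2 nr; rewrite /r; case: ifP; lia.
  apply: (negP (cl r (nx n p) lr (nxi _ lp) rq a1 a2)).
  by rewrite /addcl g1 g2 /= andbT orbC; apply/orP; left; apply/eqP => /(inj _ _ lr (nxi _ lp)).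
have ns : forall i, i < n -> c i <> s by move=> i li E; have := nos (Ordinal li); rewrite /= E eqxx.
case: (boolP [forall i : 'I_n, g (c i) (c (nx n i))]) => [/forallP allg|/forallPn [[p lp] /= ngp]].
  have cyg : cyc g n c by move=> i li; apply: (allg (Ordinal li)).
  have [i [j [li [lj [ij [h1 [h2 gij]]]]]]] := chg n4 inj cyg.
  by apply: (negP (cl i j li lj ij h1 h2)); rewrite /addcl gij.
set q := nx n p.
have lq : q < n by apply: nxi.
have [cpq [gsp gsq]] : c p != c q /\ g s (c p) /\ g s (c q).
  have := cy p lp; rewrite /addcl (negbTE ngp) /= => /and3P [] //.
have E0 := nxE lp. have E1 := nxE lq.
have Nb : forall w, w < n -> g s (c w) -> w = p \/ w = q.
  move=> w lw gw; apply: NNPP => hw.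
  have wp : w <> p by move=> E; apply: hw; left.
  have wq : w <> q by move=> E; apply: hw; right.
  have A1 : addcl (c w) (c p).
    by rewrite /addcl gw gsp /= andbT orbC; apply/orP; left; apply/eqP => /(inj _ _ lw lp).
  have A2 : addcl (c w) (c q).
    by rewrite /addcl gw gsq /= andbT orbC; apply/orP; left; apply/eqP => /(inj _ _ lw lq).
  have E2 := nxE lw.
  have B1 : p = nx n w \/ w = nx n p.
    apply: NNPP => hh.
    have x1 : p <> nx n w by move=> E; apply: hh; left.
    have x2 : w <> nx n p by move=> E; apply: hh; right.
    by move: (cl w p lw lp wp x1 x2); rewrite A1.
  have B2 : q = nx n w \/ w = nx n q.
    apply: NNPP => hh.
    have x1 : q <> nx n w by move=> E; apply: hh; left.
    have x2 : w <> nx n q by move=> E; apply: hh; right.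
    by move: (cl w q lw lq wq x1 x2); rewrite A2.
  rewrite /q in wq B2 E1; lia.
have og : forall i, i < n -> i <> p -> g (c i) (c (nx n i)).
  move=> i li ip; have := cy i li; rewrite /addcl => /orP [//|/and3P [_ g1 g2]].
  have E2 := nxE li.
  case: (Nb i li g1) => // iq; case: (Nb _ (nxi _ li) g2) => E; rewrite iq /q in E E2; lia.
pose c' i := if i <= p then c i else if i == p.+1 then s else c i.-1.
pose org i := if i <= p then i else i.-1.
have c'E : forall i, i <> p.+1 -> c' i = c (org i).
  by move=> i ip; rewrite /c' /org; case: ifP => // _; rewrite ifF //; apply/eqP.
have c's : c' p.+1 = s by rewrite /c' ifF ?eqxx //; lia.
have orgE : forall i, i < n.+1 -> i <> p.+1 -> (i <= p /\ org i = i) \/ (p.+1 < i /\ org i = i.-1).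
  by move=> i li ip; rewrite /org; case: ifP; lia.
have lorg : forall i, i < n.+1 -> i <> p.+1 -> org i < n by move=> i li ip; have := orgE i li ip; lia.
have n4' : 4 <= n.+1 by lia.
have inj' : injn n.+1 c'.
  move=> a b la lb; case: (a =P p.+1) => [->|ap]; case: (b =P p.+1) => [->|bp] //.
  - by rewrite c's c'E // => E; exfalso; apply: (ns _ (lorg _ lb bp)); rewrite -E.
  - by rewrite c's c'E // => E; exfalso; apply: (ns _ (lorg _ la ap)).
  - rewrite !c'E // => /(inj _ _ (lorg _ la ap) (lorg _ lb bp)).
    by have := orgE a la ap; have := orgE b lb bp; lia.
have cy' : cyc g n.+1 c'.
  move=> i li; have Ei := nxE li.
  case: (i =P p.+1) => [ip|ip].
    subst i; rewrite c's.
    have Hn : nx n.+1 p.+1 <> p.+1 by lia.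
    rewrite c'E //; have Eo := orgE _ (nx_lt li) Hn.
    have -> : org (nx n.+1 p.+1) = q by rewrite /q; lia.
    done.
  case: (i =P p) => [ip'|ip'].
    have -> : nx n.+1 i = p.+1 by lia.
    by rewrite c's c'E // ip' /org leqnn gsym.
  have Hn : nx n.+1 i <> p.+1 by lia.
  rewrite !c'E //; have Eo := orgE _ li ip; have Eo' := orgE _ (nx_lt li) Hn.
  have oi : org i <> p by lia.
  have -> : org (nx n.+1 i) = nx n (org i).
    have := nxE (lorg _ li ip); lia.
  exact: og (lorg _ li ip) oi.
have [a [b [la [lb [ab [h1 [h2 gab]]]]]]] := chg n4' inj' cy'.
have Ea := nxE la. have Eb := nxE lb.
case: (a =P p.+1) => [ap|ap].
  have bp : b <> p.+1 by lia.
  move: gab; rewrite ap c's c'E // => gb.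
  have Eo := orgE _ lb bp.
  by case: (Nb _ (lorg _ lb bp) gb); rewrite /q; lia.
case: (b =P p.+1) => [bp|bp].
  move: gab; rewrite bp c's c'E // gsym => ga.
  have Eo := orgE _ la ap.
  by case: (Nb _ (lorg _ la ap) ga); rewrite /q; lia.
move: gab; rewrite !c'E // => gab.
have Eoa := orgE _ la ap; have Eob := orgE _ lb bp.
have Ena := nxE (lorg _ la ap); have Enb := nxE (lorg _ lb bp).
case: (boolP ((org a == p) && (org b == q))) => [/andP [/eqP oa /eqP ob]|h3].
  by move: gab; rewrite oa ob (negbTE ngp).
case: (boolP ((org b == p) && (org a == q))) => [/andP [/eqP ob /eqP oa]|h4].
  by move: gab; rewrite oa ob gsym (negbTE ngp).
have h3' : ~ (org a = p /\ org b = nx n p) by move=> [E1' E2']; move: h3; rewrite E1' E2' !eqxx.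
have h4' : ~ (org b = p /\ org a = nx n p) by move=> [E1' E2']; move: h4; rewrite E1' E2' !eqxx.
have [x1 [x2 x3]] := arith_x lp n4 la lb ap bp ab Ea Eb h1 h2 Eoa Eob E0 Ena Enb h3' h4'.
by move: (cl (org a) (org b) (lorg _ la ap) (lorg _ lb bp) x1 x2 x3); rewrite /addcl gab.
Qed.

Lemma addcl_sym : symmetric addcl.
Proof. by move=> x y; rewrite /addcl (gsym x y) (eq_sym x y); case: (g s x); case: (g s y); rewrite ?andbF. Qed.

Lemma addcl_irr : irreflexive addcl.
Proof. by move=> x; rewrite /addcl girr eqxx. Qed.

Lemma mcl (X : {set T}) : s \notin X -> maximal_clique addcl X -> maximal_clique g X.
Proof.
move=> sX [cX mX].
have cl' : is_clique g X.
  move=> x y xX yX xy; have := cX x y xX yX xy; rewrite /addcl.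
  case/orP => [//|/and3P [_ gx gy]]; apply: NNPP => /negP ngxy.
  have allq : forall q, q \in X -> g s q.
    move=> q qX; case: (q =P x) => [->//|qx]; case: (q =P y) => [->//|qy].
    apply: NNPP => /negP gq.
    have := cX q x qX xX (introN eqP qx); rewrite /addcl (negbTE gq) /= ?andbF ?orbF => gqx.
    have := cX q y qX yX (introN eqP qy); rewrite /addcl (negbTE gq) /= ?andbF ?orbF => gqy.
    have sx : x != s by apply/eqP => E; move: sX; rewrite -E xX.
    have sy : s != y by apply/eqP => E; move: sX; rewrite E yX.
    have sq : s != q by apply/eqP => E; move: sX; rewrite E qX.
    have := @cyc4 _ g gsym chg x s y q sx xy (introN eqP (fun E => qx (esym E))) sy sq
      (introN eqP (fun E => qy (esym E))).
    rewrite gsym gx gy gsym gqy gqx (negbTE ngxy) (negbTE gq) => /(_ erefl erefl erefl erefl).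
    done.
  apply: (mX (s |: X)); first by apply: properUr; rewrite sub1set.
  move=> u v /setU1P [->|uX] /setU1P [->|vX] uv.
  - by rewrite eqxx in uv.
  - by rewrite /addcl allq.
  - by rewrite addcl_sym /addcl allq.
  - exact: cX.
split => // S' XS' cS'; apply: (mX S' XS').
by move=> x y xS yS xy; rewrite /addcl cS'.
Qed.
End AddCl.


Definition nedges (T : finType) (g : rel T) := #|[set p : T * T | g p.1 p.2]|.

Section Main.
Variables (K V : finType) (eG : rel K) (eM : rel V) (f : V -> K) (Omega : {set V}).
Hypothesis sG : simple_graph eG.
Hypothesis sM : simple_graph eM.
Hypothesis fsurj : forall i : K, exists x : V, f x = i.
Hypothesis hO : Omega = [set x | f x \in f @: Omega].
Variable F : rel V.
Hypothesis mtF : minimal_triangulation (expand eG eM f) F.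
Hypothesis mcF : maximal_clique F Omega.

Let OG := f @: Omega.
Let Qg := Qr f F.

Lemma Fsym : symmetric F. Proof. by case: mtF => [[]]. Qed.
Lemma Firr : irreflexive F. Proof. by case: mtF => [[]]. Qed.
Lemma chF : chI F. Proof. by case: mtF => _ _ /chordal_chI. Qed.
Lemma HF : subrel_edges (expand eG eM f) F. Proof. by case: mtF. Qed.
Lemma Gsym : symmetric eG. Proof. by case: sG. Qed.
Lemma Girr : irreflexive eG. Proof. by case: sG. Qed.

Lemma inO x : (x \in Omega) = (f x \in OG).
Proof. by rewrite {1}hO inE. Qed.

Lemma Qsym : symmetric Qg.
Proof.
move=> i j; apply/idP/idP => /QrP [ij h]; apply/QrP; split; auto;
  by move=> x y fx fy; rewrite Fsym; apply: h.
Qed.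

Lemma Qirr : irreflexive Qg.
Proof. by move=> i; rewrite /Qg /Qr eqxx. Qed.

Lemma QchI : chI Qg.
Proof. exact: (Q_chI Fsym chF fsurj). Qed.

Lemma GQ : subrel_edges eG Qg.
Proof.
move=> i j e; apply/QrP; split; first by move=> E; move: e; rewrite E Girr.
move=> x y fx fy; apply: HF; by rewrite /expand fx fy e orbT.
Qed.

Lemma OGclique : is_clique Qg OG.
Proof.
move=> i j iO jO ij; apply/QrP; split; first by apply/eqP.
move=> x y fx fy; case: mcF => cl _; apply: cl.
- by rewrite inO fx.
- by rewrite inO fy.
- by apply/eqP => E; move: ij; rewrite -fx -fy E eqxx.
Qed.

Lemma OGmax (S' : {set K}) : OG \proper S' -> ~ is_clique Qg S'.
Proof.
move=> pS cS; have [sub [j jS jO]] := properP pS.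
have [rj frj] := fsurj j.
have key : forall y, y \in Omega -> F rj y.
  move=> y yO; have fyS : f y \in S' by apply: (subsetP sub); rewrite -inO.
  have jy : j != f y by apply/eqP => E; move: jO; rewrite E -inO yO.
  by have /QrP [_ h] := cS j (f y) jS fyS jy; apply: h.
case: mcF => cl mx; apply: (mx (rj |: Omega)).
  by apply: properUr; rewrite sub1set inO frj.
move=> x y /setU1P [->|xO] /setU1P [->|yO] xy.
- by rewrite eqxx in xy.
- exact: key.
- by rewrite Fsym; apply: key.
- exact: cl.
Qed.

Definition Sb : pred K := fun i =>
  [exists a, exists a', [&& a != a', f a == i, f a' == i & ~~ F a a']].

Lemma SbP i : reflect (exists a a', [/\ a <> a', f a = i, f a' = i & ~~ F a a']) (Sb i).
Proof.
apply: (iffP idP) => [h|[a [a' [h1 h2 h3 h4]]]].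
  move: h; rewrite /Sb => /existsP [a /existsP [a' /and4P [/eqP h1 /eqP h2 /eqP h3 h4]]].
  by exists a, a'; split.
rewrite /Sb; apply/existsP; exists a; apply/existsP; exists a'; rewrite h2 h3 h4 !eqxx /= ?andbT.
by apply/eqP.
Qed.

Lemma chord4 a a' b b' : a <> a' -> f a = f a' -> ~~ F a a' -> b <> b' ->
  f b <> f a -> f b' <> f a -> Qg (f a) (f b) -> Qg (f a) (f b') -> F b b'.
Proof.
move=> aa' faa' nF bb' fba fb'a /QrP [_ h1] /QrP [_ h2].
have e1 := h1 a b erefl erefl; have e2 := h1 a' b (esym faa') erefl.
have e3 := h2 a b' erefl erefl; have e4 := h2 a' b' (esym faa') erefl.
have d1 : a != b by apply/eqP => E; apply: fba; rewrite E.
have d2 : a != b' by apply/eqP => E; apply: fb'a; rewrite E.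
have d3 : b != a' by apply/eqP => E; apply: fba; rewrite E faa'.
have d4 : a' != b' by apply/eqP => E; apply: fb'a; rewrite -E faa'.
have := @cyc4 _ F Fsym chF a b a' b' d1 (introN eqP aa') d2 d3 (introN eqP bb') d4.
by rewrite e1 Fsym e2 e4 Fsym e3 (negbTE nF) /=; apply.
Qed.

Lemma S_notOG i : Sb i -> i \notin OG.
Proof.
move=> /SbP [a [a' [aa' fa fa' nF]]]; apply/negP => iO.
have aO : a \in Omega by rewrite inO fa.
have a'O : a' \in Omega by rewrite inO fa'.
case: mcF => cl _; have := cl a a' aO a'O (introN eqP aa').
by rewrite (negbTE nF).
Qed.

Lemma S_indep s t : Sb s -> Sb t -> ~~ Qg s t.
Proof.
move=> /SbP [a0 [a0' [aa' fa fa' nF]]] /SbP [b [b' [bb' fb fb' nFb]]].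
apply/negP => Qst.
have st : s <> t by move=> E; move: Qst; rewrite E Qirr.
have := @chord4 a0 a0' b b' aa' (etrans fa (esym fa')) nF bb'.
rewrite fa fb fb' => /(_ (fun E => st (esym E)) (fun E => st (esym E)) Qst Qst).
by rewrite (negbTE nFb).
Qed.

Lemma S_nbr s x y : Sb s -> Qg s x -> Qg s y -> x != y -> Qg x y.
Proof.
move=> /SbP [a [a' [aa' fa fa' nF]]] Qx Qy xy; apply/QrP; split; first by apply/eqP.
move=> b b' fb fb'.
have sx : s <> x by move=> E; move: Qx; rewrite E Qirr.
have sy : s <> y by move=> E; move: Qy; rewrite E Qirr.
apply: (@chord4 a a') => //.
- by rewrite fa fa'.
- by move=> E; move: xy; rewrite -fb -fb' E eqxx.
- by rewrite fb fa => E; apply: sx.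
- by rewrite fb' fa => E; apply: sy.
- by rewrite fa fb.
- by rewrite fa fb'.
Qed.

Section Fold.
Variable g' : rel K.
Hypothesis g'sym : symmetric g'.
Hypothesis g'irr : irreflexive g'.
Hypothesis g'ch : chI g'.
Hypothesis g'Q : subrel_edges g' Qg.

Definition Gl (l : seq K) := foldr (fun t acc => addcl acc t) g' l.

Lemma Gl_props l : all Sb l ->
  [/\ symmetric (Gl l), irreflexive (Gl l), chI (Gl l), subrel_edges g' (Gl l)
    & subrel_edges (Gl l) Qg /\ forall s x, Sb s -> Gl l s x = g' s x].
Proof.
elim: l => [|t l IH] /=; first by move=> _; split => //.
case/andP => St /IH [sy ir ch sub [sQ eqS]]; split.
- exact: addcl_sym.
- exact: addcl_irr.
- exact: addcl_chI.
- by move=> x y h; rewrite /addcl sub.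
- split.
  + move=> x y; rewrite /addcl => /orP [/sQ //|/and3P [xy tx ty]].
    exact: (S_nbr St (sQ _ _ tx) (sQ _ _ ty) xy).
  + move=> s x Ss; rewrite /addcl eqS //.
    case gts : (Gl l t s); last by rewrite andbF orbF.
    by move: (S_indep St Ss); rewrite (sQ _ _ gts).
Qed.

Lemma Gl_nbr l : all Sb l -> forall s, s \in l -> forall x y, x != y ->
  Gl l s x -> Gl l s y -> Gl l x y.
Proof.
elim: l => [|t l IH] //= /andP [St Sl] s sin x y xy.
have [_ ir _ _ [_ eqS]] := Gl_props Sl.
have red : forall s' z, Sb s' -> addcl (Gl l) t s' z = Gl l s' z.
  move=> s' z Ss'; rewrite /addcl.
  case gts : (Gl l t s'); last by rewrite andbF orbF.
  have [_ _ _ _ [sQ _]] := Gl_props Sl.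
  by move: (S_indep St Ss'); rewrite (sQ _ _ gts).
move: sin; rewrite inE => /orP [/eqP ->|sl].
  by rewrite (red t x St) (red t y St) => hx hy; rewrite /addcl hx hy xy orbT.
have Ss : Sb s by move/allP: Sl => /(_ s sl).
rewrite (red s x Ss) (red s y Ss) => hx hy.
by rewrite /addcl (IH Sl s sl x y xy hx hy).
Qed.

Lemma Gl_peel l : all Sb l -> maximal_clique (Gl l) OG -> maximal_clique g' OG.
Proof.
elim: l => [|t l IH] //= /andP [St Sl] mc; apply: (IH Sl).
have [sy ir ch _ _] := Gl_props Sl.
exact: (mcl sy ch (S_notOG St) mc).
Qed.

End Fold.

Lemma key (g' : rel K) : simple_graph g' -> subrel_edges eG g' -> subrel_edges g' Qg ->
  chordal g' -> is_clique g' OG.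
Proof.
move=> [gsy gir] eGg gQ /chordal_chI gch.
set l := enum Sb.
have Sl : all Sb l by apply/allP => x; rewrite mem_enum.
have [sy ir ch sub [sQ eqS]] := Gl_props gsy gir gch gQ Sl.
pose L := liftr f F (Gl g' l).
have HS : forall a a' b b', a <> a' -> f a = f a' -> ~~ F a a' -> b <> b' ->
    f b <> f a -> f b' <> f a -> (Gl g' l) (f a) (f b) -> (Gl g' l) (f a) (f b') -> liftr f F (Gl g' l) b b'.
  move=> a a' b b' aa' faa' nF bb' fba fb'a Gb Gb'.
  have Sa : Sb (f a) by apply/SbP; exists a, a'; split.
  case: (f b =P f b') => [E|E].
    rewrite liftr_same //; apply: (chord4 aa' faa' nF bb' fba fb'a); exact: sQ.
  rewrite liftr_diff //; apply: (Gl_nbr gsy gir gch gQ Sl (s := f a)) => //.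
    by rewrite mem_enum.
  by apply/eqP.
have chL : chordal L by apply: chI_chordal; apply: lift_chI HS; [exact: chF | exact: ch].
have sL : simple_graph L.
  split.
  - move=> x y; rewrite /L /liftr (eq_sym (f x)) (Fsym x) (sy (f x)).
    by case: (f y == f x).
  - by move=> x; rewrite /L /liftr eqxx Firr.
have HL : subrel_edges (expand eG eM f) L.
  move=> x y; rewrite /expand => /orP [/andP [/eqP fxy exy]|e].
    rewrite /L liftr_same //; apply: HF; by rewrite /expand fxy eqxx exy.
  have fxy : f x <> f y by move=> E; move: e; rewrite E Girr.
  by rewrite /L liftr_diff //; apply: sub; apply: eGg.
have LF : subrel_edges L F.
  move=> x y; rewrite /L /liftr => /orP [/andP [_ //]|/andP [/eqP fxy /sQ /QrP [_ h]]].
  exact: h.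
have FL : forall x y, F x y -> L x y.
  move=> x y Fxy; apply: NNPP => nL.
  case: mtF => _ _ _ minF; apply: (minF L sL HL LF _ chL).
  by exists x, y; rewrite Fxy; apply/negP.
have QG : forall i j, Qg i j -> (Gl g' l) i j.
  move=> i j Qij; have [x fx] := fsurj i; have [y fy] := fsurj j.
  have /QrP [ij h] := Qij.
  have := FL x y (h x y fx fy); rewrite /L liftr_diff ?fx ?fy //.
have mG : maximal_clique (Gl g' l) OG.
  split; first by move=> x y xO yO xy; apply: QG; apply: OGclique.
  move=> S' pS cS; apply: (OGmax pS) => x y xS yS xy; apply: sQ; exact: cS.
by have [] := Gl_peel gsy gir gch gQ Sl mG.
Qed.

Definition Pc (g : rel K) := [/\ simple_graph g, chordal g, subrel_edges eG g,
  subrel_edges g Qg & is_clique g OG].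

Lemma final : potential_maximal_clique eG OG.
Proof.
have PQ : Pc Qg.
  split => //; [by split; [exact: Qsym | exact: Qirr] | apply: chI_chordal; exact: QchI
    | exact: GQ | exact: OGclique].
have [g0 [Pg0 ming0]] : exists g0, Pc g0 /\ forall g', Pc g' -> ~ (nedges g' < nedges g0).
  suff : forall n g, Pc g -> nedges g <= n ->
      exists g0, Pc g0 /\ forall g', Pc g' -> ~ (nedges g' < nedges g0).
    by move/(_ _ Qg PQ (leqnn _)).
  elim=> [|n IH] g Pg le.
    by exists g; split => // g' _; rewrite ltnNge (leq_trans le (leq0n _)).
  case: (classic (exists g', Pc g' /\ nedges g' < nedges g)) => [[g' [Pg' lt]]|nex].
    by apply: (IH g' Pg'); lia.
  by exists g; split => // g' Pg' lt; apply: nex; exists g'.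
have [[gsy gir] chg0 eGg0 g0Q cl0] := Pg0.
exists g0; split.
  split; [by split | exact: eGg0 | exact: chg0 | ].
  move=> g' sg' eGg' g'g0 [x [y /andP [gxy ngxy]]] chg'.
  have cl' := key sg' eGg' (fun a b h => g0Q a b (g'g0 a b h)) chg'.
  apply: (ming0 g'); first by split => // a b h; apply: g0Q; apply: g'g0.
  rewrite /nedges; apply: proper_card; apply/properP; split.
    by apply/subsetP => [[a b]]; rewrite !inE => /g'g0.
  by exists (x, y); rewrite !inE.
split => // S' pS cS; apply: (OGmax pS) => a b aS bS ab; apply: g0Q; exact: cS.
Qed.

End Main.

Unset Implicit Arguments.
Theorem lemma6 (K V : finType) (eG : rel K) (eM : rel V) (f : V -> K)
    (Omega : {set V}) :
  simple_graph eG -> simple_graph eM ->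
  (forall i : K, exists x : V, f x = i) ->
  potential_maximal_clique (expand eG eM f) Omega ->
  Omega = [set x | f x \in f @: Omega] ->
  potential_maximal_clique eG (f @: Omega).
Proof.
move=> sG sM fs [F [mtF mcF]] hO.
exact: (final sG fs hO mtF mcF).
Qed.
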